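(* Let $A$ be an $n\times n$ irreducible doubly stochastic matrix ($n\ge2$). Then \[ \mu(A)\ge1-2\cdot\phi(A). \]
   Context: For nonempty $S\subseteq[n]$, $\mathbf 1_S$ is its indicator vector and $\mathbf 1'_S=\mathbf 1_S/|S|$. Define $\mu_S(A)=\frac12\|A\mathbf 1'_S-A\mathbf 1'_{\overline S}\|_1$ and $\mu(A)=\max_{S:\,1\le|S|\le n/2}\mu_S(A)$. Edge expansion: $\phi(A)=\min_{S:\,1\le|S|\le n/2}\frac1{|S|}\sum_{i\in S,j\notin S}A_{i,j}$. *)

(* Defs.v *)
From mathcomp Require Import all_boot all_order all_algebra.
Set Implicit Arguments. Unset Strict Implicit. Unset Printing Implicit Defensive.
Import Order.TTheory GRing.Theory Num.Theory.
Local Open Scope ring_scope.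

Section Defs.
Variables (R : realFieldType) (n : nat).

Definition doubly_stochastic (A : 'M[R]_n) : Prop :=
  (forall i j, 0 <= A i j) /\
  (forall i, \sum_j A i j = 1) /\
  (forall j, \sum_i A i j = 1).

Definition irreducible (A : 'M[R]_n) : Prop :=
  forall i j : 'I_n, connect (fun k l : 'I_n => 0 < A k l) i j.

Definition admissible (S : {set 'I_n}) : bool := (0 < #|S|)%N && (2 * #|S| <= n)%N.

(* (A 1'_S)_i = (1/|S|) sum_{j in S} A i j *)
Definition avg_col (A : 'M[R]_n) (S : {set 'I_n}) (i : 'I_n) : R :=
  (\sum_(j in S) A i j) / (#|S|%:R).

Definition muS (A : 'M[R]_n) (S : {set 'I_n}) : R :=
  2^-1 * \sum_i `| avg_col A S i - avg_col A (~: S) i |.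

(* maximum over admissible S; mu_S >= 0, so the default 0 is harmless when
   the index set is nonempty (n >= 2) *)
Definition mu (A : 'M[R]_n) : R :=
  \big[Num.max/0]_(S : {set 'I_n} | admissible S) muS A S.

Definition phiS (A : 'M[R]_n) (S : {set 'I_n}) : R :=
  (\sum_(i in S) \sum_(j in ~: S) A i j) / (#|S|%:R).

(* minimum over admissible S; the default (the maximum of the same values)
   does not affect the minimum when the index set is nonempty *)
Definition phi (A : 'M[R]_n) : R :=
  \big[Num.min/ \big[Num.max/0]_(S : {set 'I_n} | admissible S) phiS A S]_(S : {set 'I_n} | admissible S) phiS A S.

End Defs.

(* Main.v *)
Require Import Defs.
From mathcomp Require Import all_boot all_order all_algebra.
From mathcomp Require Import lra zify.
Import Order.TTheory GRing.Theory Num.Theory.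
Local Open Scope ring_scope.

Lemma sumSC (R : realFieldType) n (S : {set 'I_n}) (F : 'I_n -> R) :
  \sum_i F i = \sum_(i in S) F i + \sum_(i in ~: S) F i.
Proof.
rewrite (bigID (mem S)) /=; congr (_ + _); apply: eq_bigl => i; by rewrite ?inE.
Qed.

Lemma core (R : realFieldType) (n : nat) (A : 'M[R]_n) (S : {set 'I_n}) :
  doubly_stochastic A -> admissible S -> 1 - 2 * phiS A S <= muS A S.
Proof.
move=> [A0 [Arow Acol]] /andP[k0 k2].
have hm : #|~: S| = (n - #|S|)%N by move: (cardsC S); rewrite card_ord; lia.
have km : (#|S| <= #|~: S|)%N by rewrite hm; lia.
set k := #|S|%:R : R.
set m := #|~: S|%:R : R.
have kp : 0 < k by rewrite /k ltr0n.
have mp : 0 < m by rewrite /m ltr0n; lia.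
have kmR : k <= m by rewrite /k /m ler_nat.
set SS := \sum_(i in S) \sum_(j in S) A i j.
set SC := \sum_(i in S) \sum_(j in ~: S) A i j.
set CS := \sum_(i in ~: S) \sum_(j in S) A i j.
set CC := \sum_(i in ~: S) \sum_(j in ~: S) A i j.
have r1 : SS + SC = k.
  rewrite /SS /SC -big_split /= (eq_bigr (fun _ => 1)); last by move=> i _; rewrite -sumSC Arow.
  by rewrite sumr_const.
have c1 : SS + CS = k.
  rewrite /SS /CS [X in X + _]exchange_big [X in _ + X]exchange_big /=.
  rewrite -big_split /= (eq_bigr (fun _ => 1)); last by move=> j _; rewrite -sumSC Acol.
  by rewrite sumr_const.
have c2 : SC + CC = m.
  rewrite /CC /SC [X in X + _]exchange_big [X in _ + X]exchange_big /=.
  rewrite -big_split /= (eq_bigr (fun _ => 1)); last by move=> j _; rewrite -sumSC Acol.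
  by rewrite sumr_const.
have SC0 : 0 <= SC by apply: sumr_ge0 => i _; apply: sumr_ge0.
have low : SS / k - SC / m + (CC / m - CS / k) <= \sum_i `| avg_col A S i - avg_col A (~: S) i |.
  rewrite (@sumSC _ _ S) lerD //.
    rewrite /SS /SC !mulr_suml -sumrB; apply: ler_sum => i _; exact: ler_norm.
  rewrite /CS /CC !mulr_suml -sumrB; apply: ler_sum => i _.
  by rewrite -normrN opprB ler_norm.
have e1 : SS / k = 1 - SC / k.
  by rewrite -(divff (lt0r_neq0 kp)) -mulrBl -r1 addrK.
have e2 : CS / k = SC / k.
  by congr (_ / _); apply: (addrI SS); rewrite c1 r1.
have e3 : CC / m = 1 - SC / m.
  by rewrite -(divff (lt0r_neq0 mp)) -mulrBl -c2 addrC addrK.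
have e4 : SC / m <= SC / k.
  by apply: ler_wpM2l => //; rewrite lef_pV2 ?posrE.
rewrite /muS /phiS -/SC -/k.
lra.
Qed.

Theorem lemma5p42 (R : realFieldType) (n : nat) (A : 'M[R]_n) :
  (2 <= n)%N -> doubly_stochastic A -> irreducible A ->
  mu A >= 1 - 2 * phi A.
Proof.
move=> n2 DS _.
have n0 : (0 < n)%N by lia.
have adm1 : admissible [set (Ordinal n0)].
  by rewrite /admissible cards1 /=; lia.
rewrite /phi; have [S0 S0adm ->] := eq_bigmin _ _ (fun S => phiS A S) adm1
   (fun S (hS : admissible S) => le_bigmax_cond 0 (fun S => phiS A S) hS).
apply: (le_trans (core _ _ _ _ DS S0adm)).
rewrite /mu; exact: (le_bigmax_cond 0 (fun S => muS A S) S0adm).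
Qed.
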